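(* Let $X$ be a sofic shift and $\varphi$ a flip for $(X,\sigma_X)$. Then there are a finite set $\mathcal{A}$, a map $\mathcal{L}:\mathcal{A}\to\mathcal{B}_1(X)$ and zero-one $\mathcal{A}\times\mathcal{A}$ matrices $A$ and $J$ with the following properties: (1) $\mathcal{L}_\infty:X_A\to X$ is a factoring; (2) $\mathcal{L}_\infty$ has no graph diamonds; (3) $JA=A^\top J$ and $J^2=I$; (4) $\mathcal{L}_\infty\circ\varphi_{J,A}=\varphi\circ\mathcal{L}_\infty$; (5) if $\delta\in\{0,1\}$, $x\in X$ and $\sigma_X^\delta\varphi(x)=x$, then there is $y\in X_A$ with $\mathcal{L}_\infty(y)=x$ and $\sigma_A^\delta\varphi_{J,A}(y)=y$.
   Context: For a shift space $X$, $\sigma_X$ is the shift map and $\mathcal{B}_1(X)$ is the set of symbols occurring in points of $X$. A flip for $(X,\sigma_X)$ is a homeomorphism $\varphi:X\to X$ with $\varphi\sigma_X=\sigma_X^{-1}\varphi$ and $\varphi^2=\mathrm{id}_X$. For a zero-one $\mathcal{A}\times\mathcal{A}$ matrix $A$, $X_A=\{y\in\mathcal{A}^{\mathbb{Z}}:A(y_i,y_{i+1})=1\ \forall i\in\mathbb{Z}\}$ and $\sigma_A$ is the shift map on $X_A$. $\mathcal{L}_\infty$ is the one-block code $\mathcal{L}_\infty(y)_i=\mathcal{L}(y_i)$; it is a factoring onto $X$ if $\mathcal{L}_\infty(X_A)=X$. $\mathcal{L}_\infty$ has no graph diamonds if there are no two distinct words $a_0\cdots a_n\neq b_0\cdots b_n$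 ($n\ge1$) with $A(a_i,a_{i+1})=A(b_i,b_{i+1})=1$ for all $i<n$, $a_0=b_0$, $a_n=b_n$ and $\mathcal{L}(a_i)=\mathcal{L}(b_i)$ for all $i$. If $J$ is a zero-one matrix with $J^2=I$, it is a symmetric permutation matrix, and $\tau:\mathcal{A}\to\mathcal{A}$ denotes the map with $J(a,\tau(a))=1$; if moreover $JA=A^\top J$, then $\varphi_{J,A}:X_A\to X_A$, $\varphi_{J,A}(y)_i=\tau(y_{-i})$, is a flip for $(X_A,\sigma_A)$. *)

(* Defs.v *)
From mathcomp Require Import all_boot all_order all_algebra.
Set Implicit Arguments. Unset Strict Implicit. Unset Printing Implicit Defensive.
Import Order.TTheory GRing.Theory Num.Theory.
Local Open Scope ring_scope.

Definition point (S : Type) := int -> S.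

Definition shift (S : Type) (x : point S) : point S := fun i => x (i + 1).

Definition shift_inv (S : Type) (x : point S) : point S := fun i => x (i - 1).

Definition Linf (V S : Type) (L : V -> S) (y : point V) : point S :=
  fun i => L (y i).

Definition vshift (V : Type) (R : V -> V -> bool) (y : point V) : Prop :=
  forall i : int, R (y i) (y (i + 1)).

Definition sofic (S : finType) (X : point S -> Prop) : Prop :=
  exists (V : finType) (R : V -> V -> bool) (L : V -> S),
    forall x, X x <-> exists y, vshift R y /\ x = Linf L y.

Definition B1 (S : Type) (X : point S -> Prop) (a : S) : Prop :=
  exists x, X x /\ exists i : int, x i = a.

(* continuity on X w.r.t. the product topology (alphabet discrete) *)
Definition agree_on (S : Type) (n : nat) (x y : point S) : Prop :=
  forall i : int, `|i| <= n%:Z -> x i = y i.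

Definition continuous_on (S : Type) (X : point S -> Prop)
  (f : point S -> point S) : Prop :=
  forall x, X x -> forall n : nat, exists m : nat,
    forall y, X y -> agree_on m x y -> agree_on n (f x) (f y).

(* Since phi is an
   involution, being a continuous self-map of X with phi^2 = id is
   exactly being a homeomorphism with phi^2 = id. *)
Definition is_flip (S : Type) (X : point S -> Prop)
  (phi : point S -> point S) : Prop :=
  [/\ (forall x, X x -> X (phi x)),
      continuous_on X phi,
      (forall x, X x -> phi (shift x) = shift_inv (phi x))
    & (forall x, X x -> phi (phi x) = x) ].

Definition zero_one (n : nat) (M : 'M[int]_n) : Prop :=
  forall i j, M i j = 0 \/ M i j = 1.

Definition XA (n : nat) (A : 'M[int]_n) (y : point 'I_n) : Prop :=
  forall i : int, A (y i) (y (i + 1)) = 1.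

(* tau: the map with J(a, tau a) = 1 (default a if no such entry) *)
Definition tauJ (n : nat) (J : 'M[int]_n) (a : 'I_n) : 'I_n :=
  odflt a [pick b | J a b == 1].

Definition phiJA (n : nat) (J : 'M[int]_n) (y : point 'I_n) : point 'I_n :=
  fun i => tauJ J (y (- i)).

Definition no_graph_diamonds (n : nat) (S : Type) (A : 'M[int]_n)
  (L : 'I_n -> S) : Prop :=
  ~ exists (m : nat) (a b : nat -> 'I_n),
      [/\ (1 <= m)%N,
          (forall i, (i < m)%N -> A (a i) (a i.+1) = 1 /\ A (b i) (b i.+1) = 1),
          a 0%N = b 0%N /\ a m = b m,
          (forall i, (i <= m)%N -> L (a i) = L (b i))
        & exists i, (i <= m)%N /\ a i <> b i].

(* Main.v *)
Require Import Defs.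
From mathcomp Require Import all_boot all_order all_algebra.
From mathcomp Require Import boolp zify ring lra.
Import Order.TTheory GRing.Theory Num.Theory.
Set Implicit Arguments. Unset Strict Implicit. Unset Printing Implicit Defensive.
Local Open Scope ring_scope.


Definition tr (T : Type) (k : int) (x : point T) : point T := fun j => x (j + k).

Lemma sofic_tr (S : finType) (X : point S -> Prop) :
  sofic X -> forall k x, X x -> X (tr k x).
Proof.
move=> [V [R [L HX]]] k x /HX [y [Hy ->]].
apply/HX; exists (tr k y); split.
  move=> i; rewrite /tr; have -> : i + 1 + k = i + k + 1 by ring.
  exact: Hy.
by [].
Qed.

Lemma shift_tr (T : Type) (x : point T) : shift x = tr 1 x.
Proof. by []. Qed.
Lemma shift_inv_tr (T : Type) (x : point T) : shift_inv x = tr (-1) x.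
Proof. by []. Qed.
Lemma tr_tr (T : Type) k l (x : point T) : tr k (tr l x) = tr (k + l) x.
Proof. by apply: funext => j; rewrite /tr addrA. Qed.
Lemma tr0 (T : Type) (x : point T) : tr 0 x = x.
Proof. by apply: funext => j; rewrite /tr addr0. Qed.

Lemma tr_eq (T : Type) k l (x : point T) : k = l -> tr k x = tr l x.
Proof. by move->. Qed.

Lemma flip_tr (S : finType) (X : point S -> Prop) phi :
  sofic X -> is_flip X phi -> forall k x, X x -> phi (tr k x) = tr (-k) (phi x).
Proof.
move=> sX [Hin _ Hsh Hinv].
have Hshi : forall x, X x -> phi (tr (-1) x) = tr 1 (phi x).
  move=> x Xx.
  have X' : X (tr (-1) x) by exact: sofic_tr.
  have := Hsh _ X'; rewrite shift_tr shift_inv_tr tr_tr addrN tr0 => ->.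
  by rewrite tr_tr addrN tr0.
have Hpos : forall n : nat, forall x, X x -> phi (tr n%:Z x) = tr (- n%:Z) (phi x)
                                  /\ phi (tr (- n%:Z) x) = tr n%:Z (phi x).
  elim=> [|n IH] x Xx; first by rewrite !oppr0 !tr0.
  have [IH1 IH2] := IH x Xx.
  split.
    have -> : tr n.+1%:Z x = shift (tr n%:Z x).
      by rewrite shift_tr tr_tr; apply: tr_eq; lia.
    rewrite Hsh ?IH1; last exact: sofic_tr.
    by rewrite shift_inv_tr tr_tr; apply: tr_eq; lia.
  have -> : tr (- n.+1%:Z) x = tr (-1) (tr (- n%:Z) x).
    by rewrite tr_tr; apply: tr_eq; lia.
  rewrite Hshi ?IH2; last exact: sofic_tr.
  by rewrite tr_tr; apply: tr_eq; lia.
move=> [n|n] x Xx; first by have [] := Hpos n x Xx.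
have [_ H2] := Hpos n.+1 x Xx; by rewrite NegzE H2 opprK.
Qed.


Lemma agree_sym (T : Type) n (x y : point T) : agree_on n x y -> agree_on n y x.
Proof. by move=> H i Hi; rewrite H. Qed.
Lemma agree_trans (T : Type) n (x y z : point T) :
  agree_on n x y -> agree_on n y z -> agree_on n x z.
Proof. by move=> H1 H2 i Hi; rewrite H1 ?H2. Qed.
Lemma agree_mono (T : Type) n m (x y : point T) :
  (n <= m)%N -> agree_on m x y -> agree_on n x y.
Proof. move=> Hnm H i Hi; apply: H; lia. Qed.

Lemma pigeon (T : finType) (P : nat -> Prop) (c : nat -> T) :
  (forall K, exists N, (K <= N)%N /\ P N) ->
  exists t, forall K, exists N, [/\ (K <= N)%N, P N & c N = t].
Proof.
move=> H; case: (pselect (exists t, forall K, exists N, [/\ (K <= N)%N, P N & c N = t])) => // Hn.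
exfalso.
have HK : forall t, exists K, forall N, (K <= N)%N -> ~ (P N /\ c N = t).
  move=> t; apply: contrapT => Hc; apply: Hn; exists t => K.
  apply: contrapT => HK'; apply: Hc; exists K => N KN [PN cN]; apply: HK'.
  by exists N.
pose Kf t := sval (cid (HK t)).
have [N [MN PN]] := H (\max_t Kf t).
apply: (svalP (cid (HK (c N))) N) => //.
exact: leq_trans (leq_bigmax (c N)) MN.
Qed.

Lemma pig2 (V : finType) (gs : nat -> point V) (m : nat) (Q : nat -> Prop) :
  (forall K, exists N, (K <= N)%N /\ Q N) ->
  exists N0, Q N0 /\ forall K, exists N, [/\ (K <= N)%N, Q N & agree_on m (gs N) (gs N0)].
Proof.
move=> H.
pose c N := [ffun k : 'I_(2 * m + 1) => gs N (k%:Z - m%:Z)].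
have [t Ht] := pigeon c H.
have [N0 [_ QN0 cN0]] := Ht 0%N.
exists N0; split => // K.
have [N [KN QN cN]] := Ht K; exists N; split => // i Hi.
have hk : ((absz (i + m%:Z)%R) < 2 * m + 1)%N by lia.
have E : c N = c N0 by rewrite cN cN0.
move/ffunP: E => /(_ (Ordinal hk)); rewrite !ffunE /=.
by have -> : (Posz (absz (i + m%:Z)%R) - m%:Z) = i by lia.
Qed.

Lemma konig (V : finType) (gs : nat -> point V) :
  exists g : point V, forall m : nat, exists N, (m <= N)%N /\ agree_on m (gs N) g.
Proof.
pose io m b := forall K, exists N, (K <= N)%N /\ agree_on m (gs N) b.
have Hstep : forall m b, exists b', io m b -> io m.+1 b' /\ agree_on m b b'.
  move=> m b; case: (pselect (io m b)) => Hio; last by exists b.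
  have [N0 [HN0 HN]] := pig2 gs m.+1 Hio.
  exists (gs N0) => _; split; last exact: agree_sym.
  by move=> K; have [N [KN _ HA]] := HN K; exists N.
pose stepf m b := sval (cid (Hstep m b)).
have [N0 [_ H0]] := pig2 gs 0 (Q := fun _ => True) (fun K => ex_intro _ K (conj (leqnn K) I)).
pose bs := fix f m := if m is m'.+1 then stepf m' (f m') else gs N0.
have io_bs : forall m, io m (bs m) /\ agree_on m (bs m) (bs m.+1).
  elim=> [|m [IH _]].
    have io0 : io 0 (bs 0) by move=> K; have [N [KN _ HA]] := H0 K; exists N.
    by split => //; exact: (svalP (cid (Hstep 0%N (bs 0%N))) io0).2.
  have [io1 _] := svalP (cid (Hstep m (bs m))) IH.
  by split => //; exact: (svalP (cid (Hstep m.+1 (bs m.+1))) io1).2.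
have nest : forall m k, agree_on m (bs m) (bs (m + k)%N).
  move=> m; elim=> [|k IH]; first by rewrite addn0.
  apply: agree_trans IH _; rewrite addnS; apply: (@agree_mono _ m (m + k)%N) => //.
    exact: leq_addr.
  by have [] := io_bs (m + k)%N.
pose g i := bs (absz i) i.
have Hg : forall m, agree_on m (bs m) g.
  move=> m i Hi; rewrite /g.
  have -> : m = ((absz i) + (m - (absz i)))%N by lia.
  apply/esym/(nest (absz i)); lia.
exists g => m; have [N [mN HA]] := (io_bs m).1 m.
by exists N; split => //; apply: agree_trans HA (Hg m).
Qed.

Lemma unif_cont (S : finType) (X : point S -> Prop) phi :
  sofic X -> is_flip X phi ->
  exists N : nat, forall x y, X x -> X y -> agree_on N x y -> phi x 0 = phi y 0.
Proof.
move=> sX [Hin Hcont Hsh Hinv].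
case: (pselect (exists N : nat, forall x y, X x -> X y -> agree_on N x y -> phi x 0 = phi y 0)) => // Hn.
exfalso.
have H : forall N : nat, exists p : point S * point S,
    [/\ X p.1, X p.2, agree_on N p.1 p.2 & phi p.1 0 <> phi p.2 0].
  move=> N; apply: contrapT => HN; apply: Hn; exists N => x y Xx Xy Ha.
  apply: contrapT => Hne; apply: HN; by exists (x, y).
pose xs N := (sval (cid (H N))).1.
pose ys N := (sval (cid (H N))).2.
have Hxy : forall N, [/\ X (xs N), X (ys N), agree_on N (xs N) (ys N)
                        & phi (xs N) 0 <> phi (ys N) 0].
  move=> N; exact: (svalP (cid (H N))).
move: (sX) => [V [R [L HX]]].
have Hl : forall N, exists g, vshift R g /\ xs N = Linf L g.
  by move=> N; have [] := Hxy N; move=> /HX.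
pose gs N := sval (cid (Hl N)).
have Hgs : forall N, vshift R (gs N) /\ xs N = Linf L (gs N).
  move=> N; exact: (svalP (cid (Hl N))).
have [g Hg] := konig gs.
have Rg : vshift R g.
  move=> i; have [N [_ HA]] := Hg ((absz i).+1).
  rewrite -!HA; [exact: (Hgs N).1| lia | lia].
have Xx : X (Linf L g) by apply/HX; exists g.
have [m0 Hm0] := Hcont _ Xx 0%N.
have [N [m0N HA]] := Hg m0.
have [XxN XyN HaN HneN] := Hxy N.
have A1 : agree_on m0 (Linf L g) (xs N).
  by move=> i Hi; rewrite (Hgs N).2 /Linf HA.
have A2 : agree_on m0 (Linf L g) (ys N).
  apply: agree_trans A1 _; exact: agree_mono m0N HaN.
apply: HneN.
have E1 : phi (Linf L g) 0 = phi (xs N) 0 by apply: (Hm0 _ XxN A1 0).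
have E2 : phi (Linf L g) 0 = phi (ys N) 0 by apply: (Hm0 _ XyN A2 0).
by rewrite -E1 -E2.
Qed.


Definition Hty (S V : finType) (N : nat) : finType :=
  (S * ({set V} * N.-tuple S) * ({set V} * N.-tuple S))%type.

Definition lab S V N (h : Hty S V N) : S := h.1.1.
Definition fwp S V N (h : Hty S V N) := h.1.2.
Definition bwp S V N (h : Hty S V N) := h.2.

Definition dF (S V : finType) (R : V -> V -> bool) (L0 : V -> S) (P : {set V}) (a' : S) : {set V} :=
  [set v' | (L0 v' == a') && [exists v in P, R v v']].
Definition dB (S V : finType) (R : V -> V -> bool) (L0 : V -> S) (F : {set V}) (a : S) : {set V} :=
  [set v | (L0 v == a) && [exists v' in F, R v v']].
Definition pshift (S : Type) N (p : N.-tuple S) (a : S) : N.-tuple S :=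
  [tuple nth a p (val k).+1 | k < N].
Definition fshift (S : Type) N (f : N.-tuple S) (a' : S) : N.-tuple S :=
  [tuple (if val k == 0%N then a' else nth a' f (val k).-1) | k < N].

Definition Hedge (S V : finType) (R : V -> V -> bool) (L0 : V -> S) N (h h' : Hty S V N) : Prop :=
  [/\ fwp h' = (dF R L0 (fwp h).1 (lab h'), pshift (fwp h).2 (lab h)),
      bwp h = (dB R L0 (bwp h').1 (lab h), fshift (bwp h').2 (lab h')) &
      exists v, v \in (fwp h).1 :&: (bwp h).1].

Lemma nth_mktuple_nat (T : Type) N (g : nat -> T) d i :
  (i < N)%N -> nth d [tuple g (val k) | k < N] i = g i.
Proof.
move=> Hi; rewrite -[i]/(val (Ordinal Hi)) -tnth_nth tnth_mktuple //.
Qed.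

Lemma nth_map_enum (T : Type) N (g : nat -> T) d i :
  (i < N)%N -> nth d [seq g (val k) | k <- enum 'I_N] i = g i.
Proof.
move=> Hi; rewrite (nth_map (Ordinal Hi)) ?size_enum_ord //; congr g; exact: nth_enum_ord.
Qed.

Lemma nth_map_ord (T : Type) N (f : 'I_N -> T) d i (Hi : (i < N)%N) :
  nth d [seq f k | k <- enum 'I_N] i = f (Ordinal Hi).
Proof.
rewrite (nth_map (Ordinal Hi)) ?size_enum_ord //; congr f; apply: val_inj => /=.
exact: nth_enum_ord.
Qed.

Lemma nth_mktuple_ord (T : Type) N (f : 'I_N -> T) d i (Hi : (i < N)%N) :
  nth d [tuple f k | k < N] i = f (Ordinal Hi).
Proof. by rewrite -[i]/(val (Ordinal Hi)) -tnth_nth tnth_mktuple. Qed.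

Lemma nth_tuple_default (T : Type) N (t : N.-tuple T) d i :
  (N <= i)%N -> nth d t i = d.
Proof. by move=> Hi; rewrite nth_default // size_tuple. Qed.

Lemma odflt_pick (T : finType) (A : {set T}) (p : pred T) d x :
  x \in A -> p x -> odflt d [pick v in A | p v] \in A /\ p (odflt d [pick v in A | p v]).
Proof.
move=> HA Hp; case: pickP => [v /andP [H1 H2] //|/(_ x)].
by rewrite /= HA Hp.
Qed.

Lemma H_extract (S V : finType) (R : V -> V -> bool) (L0 : V -> S) N (y : int -> Hty S V N) :
  (forall i, Hedge R L0 (y i) (y (i + 1))) ->
  exists g : point V, vshift R g /\ Linf L0 g = Linf (@lab S V N) y.
Proof.
move=> Hy.
pose P i := (fwp (y i)).1.
pose F i := (bwp (y i)).1.
have HFn : forall n : nat, F n%:Z = dB R L0 (F n.+1%:Z) (lab (y n%:Z)).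
  move=> n; rewrite /F; have [_ -> _] := Hy n%:Z; rewrite /=.
  by have -> : n%:Z + 1 = n.+1%:Z by lia.
have HPn : forall n : nat, P (- n%:Z) = dF R L0 (P (- n.+1%:Z)) (lab (y (- n%:Z))).
  move=> n; rewrite /P.
  have -> : - n%:Z = - n.+1%:Z + 1 by lia.
  by have [-> _ _] := Hy (- n.+1%:Z).
have [v0 Hv0] : exists v, v \in P 0 :&: F 0 by have [_ _] := Hy 0.
move: Hv0; rewrite inE => /andP [Hv0P Hv0F].
pose fwd := fix f n := if n is n'.+1 then odflt (f n') [pick v' in F n%:Z | R (f n') v'] else v0.
pose bwd := fix f n := if n is n'.+1 then odflt (f n') [pick v in P (- n%:Z) | R v (f n')] else v0.
have Ffwd : forall n, fwd n \in F n%:Z /\ R (fwd n) (fwd n.+1).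
  move=> k; elim: k => [|q [IH1 IH2]].
    split; first exact: Hv0F.
    move: (Hv0F); rewrite (HFn 0%N) inE => /andP [_ /existsP [v' /andP [H1 H2]]].
    exact: (odflt_pick (p := R v0) v0 H1 H2).2.
  have Hin : fwd q.+1 \in F q.+1%:Z.
    move: IH1; rewrite (HFn q) inE => /andP [_ /existsP [v' /andP [H1 H2]]].
    exact: (odflt_pick (p := R (fwd q)) (fwd q) H1 H2).1.
  split => //.
  move: (Hin); rewrite (HFn q.+1) inE => /andP [_ /existsP [v' /andP [H1 H2]]].
  exact: (odflt_pick (p := R (fwd q.+1)) (fwd q.+1) H1 H2).2.
have Pbwd : forall n, bwd n \in P (- n%:Z) /\ R (bwd n.+1) (bwd n).
  move=> k; elim: k => [|q [IH1 IH2]].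
    split; first by rewrite oppr0.
    move: (Hv0P); rewrite -oppr0 (HPn 0%N) inE => /andP [_ /existsP [v' /andP [H1 H2]]].
    exact: (odflt_pick (p := fun v => R v v0) v0 H1 H2).2.
  have Hin : bwd q.+1 \in P (- q.+1%:Z).
    move: IH1; rewrite (HPn q) inE => /andP [_ /existsP [v' /andP [H1 H2]]].
    exact: (odflt_pick (p := fun v => R v (bwd q)) (bwd q) H1 H2).1.
  split => //.
  move: (Hin); rewrite (HPn q.+1) inE => /andP [_ /existsP [v' /andP [H1 H2]]].
  exact: (odflt_pick (p := fun v => R v (bwd q.+1)) (bwd q.+1) H1 H2).2.
pose g (i : int) := match i with Posz n => fwd n | Negz n => bwd n.+1 end.
have gN : forall n, g (Negz n + 1) = bwd n.
  case=> [|n]; first by have -> : Negz 0 + 1 = Posz 0 by [].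
  by have -> : Negz n.+1 + 1 = Negz n by rewrite !NegzE; lia.
exists g; split.
  case=> [n|n]; first by rewrite (_ : n%:Z + 1 = n.+1%:Z); [exact: (Ffwd n).2 | lia].
  rewrite gN /=; exact: (Pbwd n).2.
apply: funext => -[n|n]; rewrite /Linf /g /=.
  have := (Ffwd n).1; rewrite HFn inE => /andP [/eqP -> _] //.
have H := (Pbwd n.+1).1; rewrite HPn inE in H; move/andP: H => [/eqP E _].
by rewrite NegzE; exact: E.
Qed.

Definition Mat (S V : finType) N (h : Hty S V N) (z : point S) (i : int) : Prop :=
  [/\ lab h = z i,
      forall k : 'I_N, tnth (fwp h).2 k = z (i - N%:Z + (val k)%:Z) &
      forall k : 'I_N, tnth (bwp h).2 k = z (i + 1 + (val k)%:Z)].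

Lemma H_windows (S V : finType) (R : V -> V -> bool) (L0 : V -> S) N (y : int -> Hty S V N) :
  (forall i, Hedge R L0 (y i) (y (i + 1))) ->
  forall i, Mat (y i) (Linf (@lab S V N) y) i.
Proof.
move=> Hy.
have Hp : forall d k i d0, (k + d).+1 = N ->
    nth d0 (fwp (y i)).2 k = lab (y (i - N%:Z + k%:Z)).
  elim=> [|d IH] k i d0 Hk;
    (have Hk' : (k < N)%N by lia);
    (have := Hy (i - 1); rewrite subrK => -[-> _ _] /=;
     rewrite (nth_map_ord _ _ Hk') /=).
    rewrite nth_tuple_default; last by lia.
    by congr (lab (y _)); lia.
  rewrite (IH k.+1 (i - 1)); last by lia.
  by congr (lab (y _)); lia.
have Hf : forall k i d0, (k < N)%N -> nth d0 (bwp (y i)).2 k = lab (y (i + 1 + k%:Z)).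
  elim=> [|k IH] i d0 Hk; have [_ -> _] := Hy i; rewrite /fshift /= (nth_map_ord _ _ Hk) /=.
    by rewrite addr0.
  rewrite IH; last by lia.
  by congr (lab (y _)); lia.
move=> i; split => // k.
  rewrite (tnth_nth (lab (y i))) (Hp (N - (val k).+1)%N) //.
  by case: k => [k Hk] /=; lia.
rewrite (tnth_nth (lab (y i))) Hf //.
Qed.

Lemma H_lift (S V : finType) (R : V -> V -> bool) (L0 : V -> S) N (x : point S) (g : point V) :
  vshift R g -> x = Linf L0 g ->
  exists y : int -> Hty S V N, (forall i, Hedge R L0 (y i) (y (i + 1))) /\ Linf (@lab S V N) y = x.
Proof.
move=> Hg Hx.
pose Pset i := [set v | `[< exists h : point V, [/\ forall j, j < i -> R (h j) (h (j + 1)),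
                          forall j, j <= i -> L0 (h j) = x j & h i = v] >]].
pose Fset i := [set v | `[< exists h : point V, [/\ forall j, i <= j -> R (h j) (h (j + 1)),
                          forall j, i <= j -> L0 (h j) = x j & h i = v] >]].
pose wp i := [tuple x (i - N%:Z + (val k)%:Z) | k < N].
pose wf i := [tuple x (i + 1 + (val k)%:Z) | k < N].
pose y i : Hty S V N := (x i, (Pset i, wp i), (Fset i, wf i)).
exists y; split => // i; split.
- rewrite /fwp /lab /=; congr (_, _).
    apply/setP => v'; rewrite !inE; apply/asboolP/andP.
      move=> [h [Hr Hl Hv]]; split.
        by apply/eqP; rewrite -Hv; apply: Hl; lia.
      apply/existsP; exists (h i); rewrite inE -Hv; apply/andP; split.
        apply/asboolP; exists h; split => // j Hj; [apply: Hr | apply: Hl]; lia.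
      by apply: Hr; lia.
    move=> [/eqP Hl' /existsP [v /andP [Hv Hr]]].
    move: Hv; rewrite inE => /asboolP [h [Hr0 Hl0 Hv]].
    exists (fun j => if j == i + 1 then v' else h j); split.
    + move=> j Hj; have -> : (j == i + 1) = false by apply/eqP; lia.
      case: (eqVneq j i) => [->|Hji]; first by rewrite eqxx Hv.
      have -> : (j + 1 == i + 1) = false by apply/eqP => E; apply/eqP: Hji; lia.
      by apply: Hr0; have : j != i := Hji; lia.
    + move=> j Hj; case: eqP => [->|Hne] //; apply: Hl0; lia.
    + by rewrite eqxx.
  apply: eq_from_tnth => k; rewrite /pshift !tnth_mktuple.
  case: (ltnP (val k).+1 N) => Hk.
    by rewrite (nth_mktuple_ord _ _ Hk) /=; congr x; lia.
  rewrite nth_tuple_default //; congr x; move: Hk; case: k => [k' Hk'] /= Hk; lia.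
- rewrite /bwp /lab /=; congr (_, _).
    apply/setP => v; rewrite !inE; apply/asboolP/andP.
      move=> [h [Hr Hl Hv]]; split.
        by apply/eqP; rewrite -Hv; apply: Hl; lia.
      apply/existsP; exists (h (i + 1)); rewrite inE; apply/andP; split.
        apply/asboolP; exists h; split => // j Hj; [apply: Hr | apply: Hl]; lia.
      by rewrite -Hv; apply: Hr; lia.
    move=> [/eqP Hl' /existsP [v' /andP [Hv Hr]]].
    move: Hv; rewrite inE => /asboolP [h [Hr0 Hl0 Hv]].
    exists (fun j => if j == i then v else h j); split.
    + move=> j Hj; case: (eqVneq j i) => [->|Hji].
        by rewrite (_ : (i + 1 == i) = false) ?Hv //; apply/eqP; lia.
      have -> : (j + 1 == i) = false by apply/eqP; have : j != i := Hji; lia.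
      by apply: Hr0; have : j != i := Hji; lia.
    + move=> j Hj; case: eqP => [->|Hne] //; apply: Hl0; lia.
    + by rewrite eqxx.
  apply: eq_from_tnth => k; rewrite /fshift !tnth_mktuple.
  case: eqP => Hk; first by congr x; rewrite Hk; lia.
  have Hk' : ((val k).-1 < N)%N by move: Hk; case: k => [k' Hk'] /= Hk; lia.
  rewrite (nth_mktuple_ord _ _ Hk') /=; congr x; move: Hk {Hk'}; case: k => [k' Hk'] /= Hk; lia.
- exists (g i); rewrite !inE; apply/andP; split; apply/asboolP; exists g;
    split => // j Hj; by rewrite Hx.
Qed.

Lemma det_fwd (T : Type) (u u' : nat -> T) (f : nat -> T -> T) m :
  (forall i, (i < m)%N -> u i.+1 = f i (u i) /\ u' i.+1 = f i (u' i)) ->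
  u 0%N = u' 0%N -> forall i, (i <= m)%N -> u i = u' i.
Proof.
move=> H H0; elim=> [|i IH] Hi //.
have [-> ->] := H i Hi; by rewrite IH // ltnW.
Qed.

Lemma det_bwd (T : Type) (u u' : nat -> T) (f : nat -> T -> T) m :
  (forall i, (i < m)%N -> u i = f i (u i.+1) /\ u' i = f i (u' i.+1)) ->
  u m = u' m -> forall i, (i <= m)%N -> u i = u' i.
Proof.
move=> H Hm.
suff: forall d i, (i + d)%N = m -> u i = u' i.
  by move=> Hd i Hi; apply: (Hd (m - i)%N); lia.
elim=> [|d IH] i Hid; first by rewrite addn0 in Hid; rewrite Hid.
have [-> ->] := H i (ltac:(lia)); by rewrite (IH i.+1) //; lia.
Qed.

Lemma Hext (S V : finType) N (h h' : Hty S V N) :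
  lab h = lab h' -> fwp h = fwp h' -> bwp h = bwp h' -> h = h'.
Proof. by case: h => [[a1 f1] b1]; case: h' => [[a2 f2] b2]; rewrite /lab /fwp /bwp /= => -> -> ->. Qed.

Lemma H_unique_fw (S V : finType) (R : V -> V -> bool) (L0 : V -> S) N (a b : nat -> Hty S V N) m :
  (forall i, (i < m)%N -> Hedge R L0 (a i) (a i.+1) /\ Hedge R L0 (b i) (b i.+1)) ->
  (forall i, (i <= m)%N -> lab (a i) = lab (b i)) ->
  a 0%N = b 0%N -> a m = b m -> forall i, (i <= m)%N -> a i = b i.
Proof.
move=> He Hl H0 Hm i Hi; apply: Hext; first exact: Hl.
  apply: (det_fwd (u := fun i => fwp (a i)) (u' := fun i => fwp (b i))
     (f := fun i z => (dF R L0 z.1 (lab (a i.+1)), pshift z.2 (lab (a i)))) _ _ Hi) => [j Hj|].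
    have [[E1 _ _] [E2 _ _]] := He j Hj; split => //.
    by rewrite E2 -!Hl //; apply: ltnW.
  by rewrite H0.
apply: (det_bwd (u := fun i => bwp (a i)) (u' := fun i => bwp (b i))
   (f := fun i z => (dB R L0 z.1 (lab (a i)), fshift z.2 (lab (a i.+1)))) _ _ Hi) => [j Hj|].
  have [[_ E1 _] [_ E2 _]] := He j Hj; split => //.
  by rewrite E2 -!Hl //; apply: ltnW.
by rewrite Hm.
Qed.

Lemma H_unique_bw (S V : finType) (R : V -> V -> bool) (L0 : V -> S) N (a b : nat -> Hty S V N) m :
  (forall i, (i < m)%N -> Hedge R L0 (a i.+1) (a i) /\ Hedge R L0 (b i.+1) (b i)) ->
  (forall i, (i <= m)%N -> lab (a i) = lab (b i)) ->
  a 0%N = b 0%N -> a m = b m -> forall i, (i <= m)%N -> a i = b i.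
Proof.
move=> He Hl H0 Hm i Hi; apply: Hext; first exact: Hl.
  apply: (det_bwd (u := fun i => fwp (a i)) (u' := fun i => fwp (b i))
     (f := fun i z => (dF R L0 z.1 (lab (a i)), pshift z.2 (lab (a i.+1)))) _ _ Hi) => [j Hj|].
    have [[E1 _ _] [E2 _ _]] := He j Hj; split => //.
    by rewrite E2 -!Hl //; apply: ltnW.
  by rewrite Hm.
apply: (det_fwd (u := fun i => bwp (a i)) (u' := fun i => bwp (b i))
   (f := fun i z => (dB R L0 z.1 (lab (a i.+1)), fshift z.2 (lab (a i)))) _ _ Hi) => [j Hj|].
  have [[_ E1 _] [_ E2 _]] := He j Hj; split => //.
  by rewrite E2 -!Hl //; apply: ltnW.
by rewrite H0.
Qed.


Lemma sum_perm_pick (W : finType) (t : W) (f : 'I_#|W| -> int) :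
  \sum_(j < #|W|) (if enum_val j == t then 1 else 0) * f j = f (enum_rank t).
Proof.
rewrite (bigD1 (enum_rank t)) //= enum_rankK eqxx mul1r big1 ?addr0 // => j Hj.
case: eqP => [E|]; last by rewrite mul0r.
by move: Hj; rewrite -E enum_valK eqxx.
Qed.

Definition Jmx (W : finType) (tau : W -> W) : 'M[int]_#|W| :=
  \matrix_(i, j) (if enum_val j == tau (enum_val i) then 1 else 0).

Lemma mulJ (W : finType) (tau : W -> W) (M : 'M[int]_#|W|) i k :
  (Jmx tau *m M) i k = M (enum_rank (tau (enum_val i))) k.
Proof.
rewrite mxE -(sum_perm_pick (tau (enum_val i)) (fun j => M j k)).
apply: eq_bigr => j _; by rewrite mxE.
Qed.

Lemma mulJr (W : finType) (tau : W -> W) (M : 'M[int]_#|W|) i k :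
  (forall w, tau (tau w) = w) ->
  (M *m Jmx tau) i k = M i (enum_rank (tau (enum_val k))).
Proof.
move=> Htt; rewrite mxE -(sum_perm_pick (tau (enum_val k)) (fun j => M i j)); apply: eq_bigr => j _; rewrite mxE mulrC.
congr (_ * _); congr (if _ then _ else _).
by apply/eqP/eqP => [->|->]; rewrite Htt.
Qed.

Lemma transfer (S : finType) (X : point S -> Prop) (phi : point S -> point S)
  (W : finType) (E : W -> W -> Prop) (tau : W -> W) (lab : W -> S) :
  (forall w, tau (tau w) = w) ->
  (forall u v, E u v <-> E (tau v) (tau u)) ->
  (forall u v, E u v -> B1 X (lab u) /\ B1 X (lab v)) ->
  (forall x, X x <-> exists y : point W, (forall i, E (y i) (y (i + 1))) /\ Linf lab y = x) ->
  (forall (m : nat) (a b : nat -> W),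
      (forall i, (i < m)%N -> E (a i) (a i.+1) /\ E (b i) (b i.+1)) ->
      a 0%N = b 0%N -> a m = b m -> (forall i, (i <= m)%N -> lab (a i) = lab (b i)) ->
      forall i, (i <= m)%N -> a i = b i) ->
  (forall y, (forall i, E (y i) (y (i + 1))) ->
      Linf lab (fun i => tau (y (- i))) = phi (Linf lab y)) ->
  (forall (delta : nat) x, (delta <= 1)%N -> X x -> iter delta (@shift S) (phi x) = x ->
      exists y : point W, [/\ (forall i, E (y i) (y (i + 1))), Linf lab y = x &
          iter delta (@shift W) (fun i => tau (y (- i))) = y]) ->
  exists (n : nat) (L : 'I_n -> S) (A J : 'M[int]_n),
    (forall a, B1 X (L a)) /\
    (zero_one A /\ zero_one J) /\
    (forall x, X x <-> exists y, XA A y /\ Linf L y = x) /\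
    no_graph_diamonds A L /\
    (J *m A = A^T *m J /\ J *m J = 1%:M) /\
    (forall y, XA A y -> Linf L (phiJA J y) = phi (Linf L y)) /\
    (forall (delta : nat) (x : point S), (delta <= 1)%N -> X x ->
       iter delta (@shift S) (phi x) = x ->
       exists y, [/\ XA A y, Linf L y = x &
                     iter delta (@shift 'I_n) (phiJA J y) = y]).
Proof.
move=> Htt Hsym HB1 Hfac Hdiam Hphi Hfix.
case: (pselect (exists c, B1 X c)) => [[c Hc]|Hno]; last first.
  exists 0%N, (fun i => tnth [tuple] i), 0, 0.
  have nX : forall x, ~ X x by move=> x Xx; apply: Hno; exists (x 0), x; split => //; exists 0.
  have I0 : forall i : 'I_0, False by case=> m; rewrite ltn0.
  split; first by move=> a; case: (I0 a).
  split; first by split => a; case: (I0 a).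
  split; first by move=> x; split => [/nX|[y]] //; case: (I0 (y 0)).
  split; first by move=> [m [a [b _]]]; case: (I0 (a 0%N)).
  split; first by split; apply/matrixP => a; case: (I0 a).
  split; first by move=> y; case: (I0 (y 0)).
  by move=> delta x _ /nX.
pose n := #|W|.
pose L (i : 'I_n) := if `[< B1 X (lab (enum_val i)) >] then lab (enum_val i) else c.
pose A : 'M[int]_n := \matrix_(i, j) (if `[< E (enum_val i) (enum_val j) >] then 1 else 0).
pose J : 'M[int]_n := Jmx tau.
have LE : forall i, B1 X (lab (enum_val i)) -> L i = lab (enum_val i).
  by move=> i Hi; rewrite /L; case: asboolP.
have AE : forall i j, A i j = 1 <-> E (enum_val i) (enum_val j).
  by move=> i j; rewrite /A mxE; case: asboolP.
have XAE : forall y, XA A y <-> forall i, E (enum_val (y i)) (enum_val (y (i + 1))).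
  by move=> y; split => H i; apply/AE; apply: H.
have tauJE : forall a, tauJ J a = enum_rank (tau (enum_val a)).
  move=> a; rewrite /tauJ; case: pickP => [b|/(_ (enum_rank (tau (enum_val a))))].
    by rewrite /J /Jmx mxE; case: (enum_val b =P tau (enum_val a)) => // <- _; rewrite enum_valK.
  by rewrite /J /Jmx mxE enum_rankK eqxx.
have phiE : forall y, phiJA J y = fun i => enum_rank (tau (enum_val (y (- i)))).
  by move=> y; apply: funext => i; rewrite /phiJA tauJE.
have LinfE : forall y, XA A y -> Linf L y = Linf lab (fun i => enum_val (y i)).
  move=> y /XAE Hy; apply: funext => i; rewrite /Linf LE //.
  exact: (HB1 _ _ (Hy i)).1.
exists n, L, A, J.
split; first by move=> i; rewrite /L; case: asboolP.
split; first by split => i j; rewrite mxE; case: ifP; auto.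
split.
  move=> x; split.
    move=> /Hfac [yw [Hyw <-]]; exists (fun i => enum_rank (yw i)).
    have Hy : XA A (fun i => enum_rank (yw i)) by apply/XAE => i; rewrite !enum_rankK.
    split => //; rewrite LinfE //; apply: funext => i; by rewrite /Linf enum_rankK.
  move=> [y [Hy <-]]; apply/Hfac; exists (fun i => enum_val (y i)); split; last by rewrite LinfE.
  by apply/XAE.
split.
  move=> [m [a [b [Hm Hab [Ha0 Ham] Hl [i [Hi Hne]]]]]].
  apply: Hne; apply: enum_val_inj.
  have Ed : forall i, (i < m)%N -> E (enum_val (a i)) (enum_val (a i.+1)) /\ E (enum_val (b i)) (enum_val (b i.+1)).
    by move=> j Hj; have [H1 H2] := Hab j Hj; split; apply/AE.
  apply: (Hdiam m (fun i => enum_val (a i)) (fun i => enum_val (b i))) => //=; first by rewrite Ha0.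
    by rewrite Ham.
  move=> j Hj.
  have Bj : forall (z : nat -> 'I_n), (forall i, (i < m)%N -> E (enum_val (z i)) (enum_val (z i.+1))) ->
            B1 X (lab (enum_val (z j))).
    move=> z Hz; case: (ltnP j m) => Hjm; first exact: (HB1 _ _ (Hz j Hjm)).1.
    have Ejm : j = m by apply/eqP; rewrite eqn_leq Hj Hjm.
    move: (Hz m.-1); rewrite prednK // => /(_ (leqnn m)) /HB1 [_]; by rewrite Ejm.
  rewrite -(LE (a j)); last by apply: Bj => k Hk; exact: (Ed k Hk).1.
  rewrite -(LE (b j)); last by apply: Bj => k Hk; exact: (Ed k Hk).2.
  exact: Hl.
split.
  split; apply/matrixP => i k.
    rewrite mulJ mulJr // mxE /A !mxE !enum_rankK.
    have := Hsym (tau (enum_val i)) (enum_val k); rewrite Htt.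
    by case: asboolP; case: asboolP => // H1 H2 [H3 H4]; exfalso; tauto.
  rewrite mulJ /J /Jmx !mxE enum_rankK Htt.
  by case: (eqVneq k i) => [->|Hki]; rewrite ?eqxx // (inj_eq enum_val_inj) (negbTE Hki).
split.
  move=> y Hy; rewrite phiE (LinfE y Hy) -Hphi; last by apply/XAE.
  apply: funext => i; rewrite /Linf LE enum_rankK //.
  move/XAE: Hy => Hy.
  have := Hy (- i - 1); rewrite (_ : - i - 1 + 1 = - i); last by ring.
  by move=> /Hsym /HB1 [H _].
move=> delta x Hd Xx Hfx.
have [yw [Hyw Hlab Hit]] := Hfix delta x Hd Xx Hfx.
have Hy : XA A (fun i => enum_rank (yw i)) by apply/XAE => i; rewrite !enum_rankK.
exists (fun i => enum_rank (yw i)); split => //.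
  rewrite LinfE //; apply: funext => i; by rewrite /Linf enum_rankK -Hlab.
rewrite phiE; move: Hit.
case: delta Hd {Hfx} => [_|[_|//]] /= Hit.
  by apply: funext => i; rewrite enum_rankK -[in RHS]Hit.
by apply: funext => i; rewrite /shift enum_rankK -[in RHS]Hit.
Qed.


Lemma Mat_agree (S V : finType) N (h : Hty S V N) z1 z2 :
  Mat h z1 0 -> Mat h z2 0 -> agree_on N z1 z2.
Proof.
move=> [l1 p1 f1] [l2 p2 f2] j Hj.
case: (ltrgtP j 0) => Hj0.
- have hk : (absz (j + N%:Z)%R < N)%N by lia.
  have := p1 (Ordinal hk); rewrite p2 /= => E.
  by have <- : 0 - N%:Z + (absz (j + N%:Z)%R)%:Z = j by lia.
- have hk : (absz (j - 1)%R < N)%N by lia.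
  have := f1 (Ordinal hk); rewrite f2 /= => E.
  by have <- : 0 + 1 + (absz (j - 1)%R)%:Z = j by lia.
- by rewrite Hj0 -l1 -l2.
Qed.

Lemma Mat_tr (S V : finType) N (h : Hty S V N) z i : Mat h z i -> Mat h (tr i z) 0.
Proof.
move=> [l p f]; split.
- by rewrite /tr add0r.
- by move=> k; rewrite p /tr; congr z; lia.
- by move=> k; rewrite f /tr; congr z; lia.
Qed.

Definition Psi (S V : finType) N (X : point S -> Prop) (phi : point S -> point S)
  (h : Hty S V N) : S :=
  match pselect (exists z, X z /\ Mat h z 0) with
  | left pf => phi (sval (cid pf)) 0
  | right _ => lab h
  end.

Lemma Psi_key (S V : finType) N (X : point S -> Prop) (phi : point S -> point S) :
  sofic X -> is_flip X phi ->
  (forall x y, X x -> X y -> agree_on N x y -> phi x 0 = phi y 0) ->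
  forall (h : Hty S V N) z i, X z -> Mat h z i -> Psi X phi h = phi z (- i).
Proof.
move=> sX Hf HN h z i Xz Hm.
have Xz' : X (tr i z) by exact: sofic_tr.
have Hm' := Mat_tr Hm.
rewrite /Psi; case: pselect => [pf|Hn]; last by exfalso; apply: Hn; exists (tr i z).
have [Xc Hc] := svalP (cid pf).
rewrite (HN _ _ Xc Xz' (Mat_agree Hc Hm')) (flip_tr sX Hf) //.
by rewrite /tr add0r.
Qed.

Definition Cond (S V : finType) N (X : point S -> Prop) (phi : point S -> point S)
  (u : Hty S V N * Hty S V N) : Prop :=
  [/\ lab u.2 = Psi X phi u.1, lab u.1 = Psi X phi u.2, B1 X (lab u.1) & B1 X (lab u.2)].

Definition E2 (S V : finType) (R : V -> V -> bool) (L0 : V -> S) N (X : point S -> Prop)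
  (phi : point S -> point S) (u v : Hty S V N * Hty S V N) : Prop :=
  [/\ Hedge R L0 u.1 v.1, Hedge R L0 v.2 u.2, Cond X phi u & Cond X phi v].

Lemma Cond_swap (S V : finType) N X phi (u : Hty S V N * Hty S V N) :
  Cond X phi u -> Cond X phi (u.2, u.1).
Proof. by case: u => a b [H1 H2 H3 H4]; split. Qed.

Lemma build (S V : finType) (R : V -> V -> bool) (L0 : V -> S) N (X : point S -> Prop) phi :
  sofic X -> is_flip X phi ->
  (forall x y, X x -> X y -> agree_on N x y -> phi x 0 = phi y 0) ->
  forall (s s' : int -> Hty S V N) x z c,
  (forall i, Hedge R L0 (s i) (s (i + 1))) ->
  (forall i, Hedge R L0 (s' i) (s' (i + 1))) ->
  Linf (@lab S V N) s = x -> Linf (@lab S V N) s' = z -> X x -> X z ->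
  (forall j, z j = phi x (j - c)) ->
  (forall i, E2 R L0 X phi (s i, s' (c - i)) (s (i + 1), s' (c - (i + 1)))) /\
  Linf (fun u : Hty S V N * Hty S V N => lab u.1) (fun i => (s i, s' (c - i))) = x.
Proof.
move=> sX Hf HN s s' x z c Hs Hs' Hsx Hsz Xx Xz Hzc.
have Hin : forall j, lab (s j) = x j by move=> j; rewrite -Hsx.
have Hin' : forall j, lab (s' j) = z j by move=> j; rewrite -Hsz.
have Ws : forall j, Mat (s j) x j by move=> j; rewrite -Hsx; exact: H_windows.
have Ws' : forall j, Mat (s' j) z j by move=> j; rewrite -Hsz; exact: H_windows.
have Hzf : z = tr (- c) (phi x) by apply: funext => j; rewrite Hzc.
have Hpz : phi z = tr c x.
  have [Hi _ _ Hinv] := Hf.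
  by rewrite Hzf (flip_tr sX Hf (-c) (Hi _ Xx)) Hinv // opprK.
have HC : forall i, Cond X phi (s i, s' (c - i)).
  move=> i; split => /=.
  - rewrite Hin' Hzc (Psi_key sX Hf HN Xx (Ws i)); congr (phi x _); ring.
  - rewrite Hin (Psi_key sX Hf HN Xz (Ws' (c - i))) Hpz /tr; congr (x _); ring.
  - by rewrite Hin; exists x; split => //; exists i.
  - by rewrite Hin'; exists z; split => //; exists (c - i).
split; last by apply: funext => i; rewrite /Linf /= Hin.
move=> i; split => //=.
have := Hs' (c - (i + 1)); by rewrite (_ : c - (i + 1) + 1 = c - i); last ring.
Qed.

Unset Implicit Arguments.

Theorem proposition2p1 (S : finType) (X : point S -> Prop)
  (phi : point S -> point S) :
  sofic X -> is_flip X phi ->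
  exists (n : nat) (L : 'I_n -> S) (A J : 'M[int]_n),
    (forall a, B1 X (L a)) /\
    (zero_one A /\ zero_one J) /\
    (forall x, X x <-> exists y, XA A y /\ Linf L y = x) /\
    no_graph_diamonds A L /\
    (J *m A = A^T *m J /\ J *m J = 1%:M) /\
    (forall y, XA A y -> Linf L (phiJA J y) = phi (Linf L y)) /\
    (forall (delta : nat) (x : point S), (delta <= 1)%N -> X x ->
       iter delta (@shift S) (phi x) = x ->
       exists y, [/\ XA A y, Linf L y = x &
                     iter delta (@shift 'I_n) (phiJA J y) = y]).
Proof.
move=> sX Hf.
have [N HN] := unif_cont sX Hf.
have [V [R [L0 HX]]] := sX.
have [Hin _ _ Hinv] := Hf.
have Hbuild := build (R := R) (L0 := L0) sX Hf HN.
have lift : forall x, X x -> exists s : int -> Hty S V N,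
    (forall i, Hedge R L0 (s i) (s (i + 1))) /\ Linf (@lab S V N) s = x.
  move=> x /HX [g [Hg Hx]]; by have := H_lift N Hg Hx.
have extr : forall s : int -> Hty S V N, (forall i, Hedge R L0 (s i) (s (i + 1))) ->
    X (Linf (@lab S V N) s).
  move=> s Hs; have [g [Hg Hgs]] := H_extract Hs; apply/HX; exists g; split => //.
apply: (@transfer S X phi (Hty S V N * Hty S V N)%type (E2 R L0 X phi)
          (fun u => (u.2, u.1)) (fun u => lab u.1)).
- by case.
- move=> [a b] [c d]; rewrite /E2 /=; split => -[H1 H2 H3 H4];
    split => //; exact: (Cond_swap H3) || exact: (Cond_swap H4).
- by move=> u v [_ _ [_ _ B _] [_ _ B' _]].
- move=> x; split.
    move=> Xx; have [s [Hs Hsx]] := lift x Xx.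
    have [s' [Hs' Hsx']] := lift (phi x) (Hin x Xx).
    have [Hy Hl] := Hbuild s s' x (phi x) 0 Hs Hs' Hsx Hsx' Xx (Hin x Xx)
      (fun j => ltac:(by rewrite subr0)).
    by eexists; split; [exact: Hy | exact: Hl].
  move=> [y [Hy <-]].
  have Hs : forall i, Hedge R L0 (y i).1 (y (i + 1)).1 by move=> i; have [] := Hy i.
  exact: (extr (fun i => (y i).1) Hs).
- move=> m a b Hab H0 Hm Hl i Hi.
  have E1 : forall i, (i <= m)%N -> (a i).1 = (b i).1.
    apply: (H_unique_fw (R := R) (L0 := L0)) => //.
    + by move=> j Hj; have [[? _ _ _] [? _ _ _]] := Hab j Hj.
    + by rewrite H0.
    + by rewrite Hm.
  have E2' : forall i, (i <= m)%N -> (a i).2 = (b i).2.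
    apply: (H_unique_bw (R := R) (L0 := L0)) => //.
    + by move=> j Hj; have [[_ ? _ _] [_ ? _ _]] := Hab j Hj.
    + move=> j Hj; case: (ltnP j m) => Hjm.
        have [[_ _ [Ca _ _ _] _] [_ _ [Cb _ _ _] _]] := Hab j Hjm.
        by rewrite Ca Cb E1 // ltnW.
      have -> : j = m by apply/eqP; rewrite eqn_leq Hj Hjm.
      by rewrite Hm.
    + by rewrite H0.
    + by rewrite Hm.
  by rewrite [a i]surjective_pairing [b i]surjective_pairing E1 // E2'.
- move=> y Hy.
  pose s := fun i => (y i).1.
  have Hs : forall i, Hedge R L0 (s i) (s (i + 1)) by move=> i; have [] := Hy i.
  have Xs := extr s Hs.
  apply: funext => i; rewrite /Linf /=.
  have [_ _ [C1 _ _ _] _] := Hy (- i).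
  rewrite C1 (Psi_key sX Hf HN Xs (H_windows Hs (- i))) opprK //.
- move=> delta x Hd Xx Hfx.
  have [s [Hs Hsx]] := lift x Xx.
  case: delta Hd Hfx => [|[|//]] _ /= Hfx.
    have [Hy Hl] := Hbuild s s x x 0 Hs Hs Hsx Hsx Xx Xx
      (fun j => ltac:(by rewrite subr0 Hfx)).
    exists (fun i => (s i, s (0 - i))); split => //.
    by apply: funext => i; rewrite /= !sub0r opprK.
  have [Hy Hl] := Hbuild s s x x (-1) Hs Hs Hsx Hsx Xx Xx
    (fun j => ltac:(by rewrite -[in LHS]Hfx /shift opprK)).
  exists (fun i => (s i, s (-1 - i))); split => //.
  apply: funext => i; rewrite /shift /=; congr pair; congr s; ring.
Qed.
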